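(* Let $(q,\boldsymbol{\alpha}^{(p)},\boldsymbol{\alpha}^{(s)},\boldsymbol{\beta}^{(p)},\boldsymbol{\beta}^{(s)})$ be a cyclic-addition degree table (CAT) for parameters $K,L,T$ with $N$ unique entries. Let $p$ be a prime with $q\mid p-1$ and let $\boldsymbol\rho=(\rho_1,\dots,\rho_N)$ be $q$-th roots of unity in $\mathbb{F}_p$ satisfying conditions (IV)(a) and (IV)(b) of the CAT definition. Then the polynomial-code PDMM scheme with $N$ workers defined in the context by these degrees and evaluation points is $T$-private and decodable.
   Context: Definition (CAT). For a positive integer $q$ and vectors $\boldsymbol{\alpha}^{(p)}\in\mathbb{Z}_q^K,\boldsymbol{\alpha}^{(s)}\in\mathbb{Z}_q^T,\boldsymbol{\beta}^{(p)}\in\mathbb{Z}_q^L,\boldsymbol{\beta}^{(s)}\in\mathbb{Z}_q^T$ ($\mathbb{Z}_q$ the integers mod $q$), write $\{\mathbf v\}$ for the set of entries of a vector $\mathbf v$ and let (additions in $\mathbb{Z}_q$, sumsets $\mathcal A+\mathcal B=\{a+b\}$) $\mathcal{TL}=\{\boldsymbol{\alpha}^{(p)}\}+\{\boldsymbol{\beta}^{(p)}\}$, $\mathcal{TR}=\{\boldsymbol{\alpha}^{(p)}\}+\{\boldsymbol{\beta}^{(s)}\}$, $\mathcal{BL}=\{\boldsymbol{\alpha}^{(s)}\}+\{\boldsymbol{\beta}^{(p)}\}$, $\mathcal{BR}=\{\boldsymbol{\alpha}^{(s)}\}+\{\boldsymbol{\beta}^{(s)}\}$, and let $\boldsymbol\gamma$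 list the elements of $\mathcal{TL}\cup\mathcal{TR}\cup\mathcal{BL}\cup\mathcal{BR}$ in ascending order (identifying $\mathbb{Z}_q$ with $\{0,\dots,q-1\}$). For a vector $\boldsymbol\rho$ of length $n$ of $q$-th roots of unity and $\boldsymbol\delta\in\mathbb{Z}_q^m$, $\mathbf V(\boldsymbol\rho,\boldsymbol\delta)$ is the $n\times m$ matrix with entries $\rho_i^{\delta_j}$. The tuple is a CAT for $K,L,T$ with $N$ unique entries if: (I) $|\mathcal{TL}\cup\mathcal{TR}\cup\mathcal{BL}\cup\mathcal{BR}|=N$; (II) $|\mathcal{TL}|=KL$; (III) $\mathcal{TL}\cap\mathcal{TR}=\mathcal{TL}\cap\mathcal{BL}=\mathcal{TL}\cap\mathcal{BR}=\emptyset$; (IV) in every prime field $\mathbb{F}_p$ with $q\mid p-1$ there exist $N$ $q$-th roots of unity $\boldsymbol\rho=(\rho_1,\dots,\rho_N)$ such that (a) $\mathbf V(\boldsymbol\rho,\boldsymbol\gamma)$ is invertible and (b) all $T\times T$ submatrices of $\mathbf V(\boldsymbol\rho,\boldsymbol{\alpha}^{(s)})$ and of $\mathbf V(\boldsymbol\rho,\boldsymbol{\beta}^{(s)})$ are invertible. The scheme: matrices $\mathbf A\in\mathbb{F}_p^{r_A\times c_A}$ and $\mathbf B\in\mathbb{F}_p^{c_A\times c_B}$ have an arbitrary (unknown) joint distribution, with $K\mid r_A$, $L\mid c_B$. Write $\mathbf A=(\mathbf A_1^T\cdots\mathbf A_K^T)^T$ (horizontal split into $K$ equal blocks) and $\mathbf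 B=(\mathbf B_1\cdots\mathbf B_L)$ (vertical split into $L$ equal blocks). A main node draws $\mathbf R_1,\dots,\mathbf R_T$ (of the size of $\mathbf A_i$) and $\mathbf S_1,\dots,\mathbf S_T$ (of the size of $\mathbf B_j$) independently and uniformly at random, independent of $(\mathbf A,\mathbf B)$, and forms $\mathbf F(x)=\sum_{i=1}^K\mathbf A_i x^{\alpha^{(p)}_i}+\sum_{i=1}^T\mathbf R_i x^{\alpha^{(s)}_i}$ and $\mathbf G(x)=\sum_{j=1}^L\mathbf B_j x^{\beta^{(p)}_j}+\sum_{j=1}^T\mathbf S_j x^{\beta^{(s)}_j}$ (exponents taken as representatives in $\{0,\dots,q-1\}$). Worker $n\in\{1,\dots,N\}$ receives $\widetilde{\mathbf A}_n=\mathbf F(\rho_n)$, $\widetilde{\mathbf B}_n=\mathbf G(\rho_n)$ and returns $\widetilde{\mathbf A}_n\widetilde{\mathbf B}_n$. The scheme is $T$-private if for every set $\mathcal T\subset\{1,\dots,N\}$ with $|\mathcal T|=T$ the mutual information between $(\mathbf A,\mathbf B)$ and $\{(\widetilde{\mathbf A}_n,\widetilde{\mathbf B}_n):n\in\mathcal T\}$ is zero. It is decodable if the main node can compute all products $\mathbf A_i\mathbf B_j$, $i\in\{1,\dots,K\}$, $j\in\{1,\dots,L\}$, from the $N$ returned products. *)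

(* Defs.v *)
From HB Require Import structures.
From mathcomp Require Import all_boot all_order all_algebra.
From mathcomp Require Import reals exp.
Set Implicit Arguments. Unset Strict Implicit. Unset Printing Implicit Defensive.
Import Order.TTheory GRing.Theory Num.Theory.
Local Open Scope ring_scope.

Definition entries (q n : nat) (v : 'I_n -> 'I_q) : {set 'I_q} :=
  [set v i | i : 'I_n].

Definition sumset (q : nat) (A B : {set 'I_q}) : {set 'I_q} :=
  [set x : 'I_q | [exists a in A, exists b in B, val x == ((val a + val b) %% q)%N]].

Section CATdefs.
Variables (q K L T : nat).
Variables (ap : 'I_K -> 'I_q) (as_ : 'I_T -> 'I_q)
          (bp : 'I_L -> 'I_q) (bs : 'I_T -> 'I_q).

Definition TL := sumset (entries ap) (entries bp).
Definition TR := sumset (entries ap) (entries bs).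
Definition BL := sumset (entries as_) (entries bp).
Definition BR := sumset (entries as_) (entries bs).
Definition allU := TL :|: TR :|: BL :|: BR.

Definition gamma : seq nat := sort leq [seq val x | x in allU].
End CATdefs.

Definition Vmx (F : ringType) (n m : nat) (rho : 'I_n -> F) (delta : 'I_m -> nat)
  : 'M[F]_(n, m) := \matrix_(i < n, j < m) rho i ^+ delta j.

Definition CAT_eval_conditions (q K L T N : nat)
    (ap : 'I_K -> 'I_q) (as_ : 'I_T -> 'I_q) (bp : 'I_L -> 'I_q) (bs : 'I_T -> 'I_q)
    (F : comUnitRingType) (rho : 'I_N -> F) : Prop :=
  (forall i, rho i ^+ q = 1) /\
  Vmx rho (fun j : 'I_N => nth 0%N (gamma ap as_ bp bs) j) \in unitmx /\
  (forall f : 'I_T -> 'I_N, injective f ->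
      rowsub f (Vmx rho (fun j => val (as_ j))) \in unitmx /\
      rowsub f (Vmx rho (fun j => val (bs j))) \in unitmx).

Definition is_CAT (q K L T N : nat)
    (ap : 'I_K -> 'I_q) (as_ : 'I_T -> 'I_q) (bp : 'I_L -> 'I_q) (bs : 'I_T -> 'I_q)
  : Prop :=
  (0 < q)%N /\
  #|allU ap as_ bp bs| = N /\
  #|TL ap bp| = (K * L)%N /\
  TL ap bp :&: TR ap bs = set0 /\ TL ap bp :&: BL as_ bp = set0 /\
  TL ap bp :&: BR as_ bs = set0 /\
  (forall p : nat, prime p -> (q %| p.-1)%N ->
     exists rho : 'I_N -> 'F_p, CAT_eval_conditions ap as_ bp bs rho).

Lemma block_idx_lt (K m : nat) (i : 'I_K) (r : 'I_m) : (i * m + r < K * m)%N.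
Proof.
case: i r => i Hi [r Hr] /=.
apply: (@leq_trans (i * m + m)); first by rewrite ltn_add2l.
by rewrite -mulSnr leq_mul2r Hi orbT.
Qed.

Definition block_idx (K m : nat) (i : 'I_K) (r : 'I_m) : 'I_(K * m) :=
  Ordinal (block_idx_lt i r).

(* A = (A_1^T ... A_K^T)^T : i-th horizontal block (rows i*m .. i*m+m-1) *)
Definition Ablk (F : Type) (K m c : nat) (A : 'M[F]_(K * m, c)) (i : 'I_K)
  : 'M[F]_(m, c) := \matrix_(r < m, j < c) A (block_idx i r) j.

(* B = (B_1 ... B_L) : j-th vertical block (columns j*n .. j*n+n-1) *)
Definition Bblk (F : Type) (L n c : nat) (B : 'M[F]_(c, L * n)) (j : 'I_L)
  : 'M[F]_(c, n) := \matrix_(r < c, s < n) B r (block_idx j s).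

Section Scheme.
Variables (F : comRingType) (q K L T N m c n : nat).
Variables (ap : 'I_K -> 'I_q) (as_ : 'I_T -> 'I_q)
          (bp : 'I_L -> 'I_q) (bs : 'I_T -> 'I_q) (rho : 'I_N -> F).

Definition shareA (A : 'M[F]_(K * m, c)) (R : 'I_T -> 'M[F]_(m, c)) (k : 'I_N)
  : 'M[F]_(m, c) :=
  \sum_(i < K) rho k ^+ ap i *: Ablk A i + \sum_(t < T) rho k ^+ as_ t *: R t.

Definition shareB (B : 'M[F]_(c, L * n)) (S : 'I_T -> 'M[F]_(c, n)) (k : 'I_N)
  : 'M[F]_(c, n) :=
  \sum_(j < L) rho k ^+ bp j *: Bblk B j + \sum_(t < T) rho k ^+ bs t *: S t.

Definition decodable : Prop :=
  exists dec : ('I_N -> 'M[F]_(m, n)) -> 'I_K -> 'I_L -> 'M[F]_(m, n),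
    forall (A : 'M[F]_(K * m, c)) (B : 'M[F]_(c, L * n))
           (R : 'I_T -> 'M[F]_(m, c)) (S : 'I_T -> 'M[F]_(c, n)) i j,
      dec (fun k => shareA A R k *m shareB B S k) i j = Ablk A i *m Bblk B j.
End Scheme.

Section MutualInfo.
Variable (R : realType).

Definition is_pmf (Om : finType) (P : Om -> R) : Prop :=
  (forall w, 0 <= P w) /\ \sum_w P w = 1.

(* I(X;Y) for random variables X, Y on a finite probability space (Om, P);
   terms with P(X=x,Y=y) = 0 contribute 0 (convention 0 log 0 = 0). *)
Definition mutual_info (Om TX TY : finType) (P : Om -> R)
    (X : Om -> TX) (Y : Om -> TY) : R :=
  \sum_(x : TX) \sum_(y : TY)
    let pxy := \sum_(w | (X w == x) && (Y w == y)) P w in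
    let px := \sum_(w | X w == x) P w in
    let py := \sum_(w | Y w == y) P w in
    if pxy == 0 then 0 else pxy * ln (pxy / (px * py)).
End MutualInfo.

(* The joint law of ((A,B), (R_1..R_T), (S_1..S_T)): (A,B) ~ PAB (arbitrary),
   the R_t, S_t i.i.d. uniform and independent of (A,B). *)
Section Privacy.
Variables (R : realType) (p q K L T N m c n : nat).
Variables (ap : 'I_K -> 'I_q) (as_ : 'I_T -> 'I_q)
          (bp : 'I_L -> 'I_q) (bs : 'I_T -> 'I_q) (rho : 'I_N -> 'F_p).

Definition DataT := ('M['F_p]_(K * m, c) * 'M['F_p]_(c, L * n))%type.
Definition RandT :=
  ({ffun 'I_T -> 'M['F_p]_(m, c)} * {ffun 'I_T -> 'M['F_p]_(c, n)})%type.
Definition OmegaT := (DataT * RandT)%type.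

Definition scheme_law (PAB : DataT -> R) (w : OmegaT) : R :=
  PAB w.1 / #|{: RandT}|%:R.

Definition colluders_view (Sset : {set 'I_N}) (w : OmegaT)
  : {ffun 'I_N -> 'M['F_p]_(m, c) * 'M['F_p]_(c, n)} :=
  [ffun k => if k \in Sset then
       (shareA ap as_ rho w.1.1 w.2.1 k, shareB bp bs rho w.1.2 w.2.2 k)
     else (0, 0)].

Definition T_private : Prop :=
  forall PAB : DataT -> R, is_pmf PAB ->
  forall Sset : {set 'I_N}, #|Sset| = T ->
    mutual_info (scheme_law PAB) (fun w : OmegaT => w.1) (colluders_view Sset) = 0.
End Privacy.

(* Main.v *)
Require Import Defs.
From HB Require Import structures.
From mathcomp Require Import all_boot all_order all_algebra.
From mathcomp Require Import reals exp.
From mathcomp Require Import ring.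
Import Order.TTheory GRing.Theory Num.Theory.
Set Implicit Arguments. Unset Strict Implicit. Unset Printing Implicit Defensive.
Local Open Scope ring_scope.

Lemma comb_inv (F : comUnitRingType) (V : lmodType F) n (M M' : 'M[F]_n)
  (c : 'I_n -> V) : M *m M' = 1%:M ->
  forall i, \sum_k M i k *: \sum_l M' k l *: c l = c i.
Proof.
move=> HM i.
under eq_bigr do rewrite scaler_sumr.
rewrite exchange_big /=.
under eq_bigr => l _.
  under eq_bigr do rewrite scalerA.
  rewrite -scaler_suml.
  have -> : \sum_k M i k * M' k l = (M *m M') i l by rewrite mxE.
  rewrite HM mxE.
  over.
rewrite (bigD1 i) //= eqxx scale1r big1 ?addr0 //.
by move=> l /negbTE; rewrite eq_sym => ->; rewrite scale0r.
Qed.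

Lemma exist_solve (F : comUnitRingType) (V : lmodType F) n (M : 'M[F]_n)
  (D : 'I_n -> V) : M \in unitmx ->
  exists c : 'I_n -> V, forall i, \sum_k M i k *: c k = D i.
Proof.
move=> HM; exists (fun k => \sum_l invmx M k l *: D l).
by apply: comb_inv; rewrite mulmxV.
Qed.

Lemma sum_const_mul (R : pzRingType) (I : finType) (P : pred I) (a : R) :
  \sum_(i | P i) a = a * \sum_(i | P i) 1.
Proof. by rewrite mulr_sumr; apply: eq_bigr => *; rewrite mulr1. Qed.

Lemma mi_zero (R : realType) (DT RT TY : finType) (PAB : DT -> R)
  (Y : DT * RT -> TY) : is_pmf PAB ->
  (forall x x' y, \sum_(r | Y (x,r) == y) (1:R) = \sum_(r | Y (x',r) == y) 1) ->
  mutual_info (fun w : DT * RT => PAB w.1 / #|{:RT}|%:R) (fun w => w.1) Y = 0.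
Proof.
move=> [PAB0 PAB1] Hc.
rewrite /mutual_info; apply: big1 => x _; apply: big1 => y _ /=.
set C := #|{:RT}|%:R.
set cnt := \sum_(r | Y (x,r) == y) (1:R).
have Hxy : \sum_(w | (w.1 == x) && (Y w == y)) PAB w.1 / C = PAB x / C * cnt.
  have -> : \sum_(w | (w.1 == x) && (Y w == y)) PAB w.1 / C =
      \sum_(x' | x' == x) \sum_(r | Y (x',r) == y) PAB x' / C.
    by rewrite pair_big_dep; apply: eq_big => [[a b]|[a b]].
  by rewrite big_pred1_eq sum_const_mul.
have Hx : \sum_(w : DT * RT | w.1 == x) PAB w.1 / C = PAB x / C * C.
  have -> : \sum_(w : DT * RT | w.1 == x) PAB w.1 / C =
      \sum_(x' | x' == x) \sum_(r : RT | true) PAB x' / C.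
    by rewrite pair_big_dep; apply: eq_big => [[a b]|[a b]] //=; rewrite andbT.
  by rewrite big_pred1_eq sum_const_mul sumr_const.
have Hy : \sum_(w | Y w == y) PAB w.1 / C = cnt / C.
  have -> : \sum_(w | Y w == y) PAB w.1 / C =
      \sum_(x' | true) \sum_(r | Y (x',r) == y) PAB x' / C.
    by rewrite pair_big_dep; apply: eq_big => [[a b]|[a b]].
  under eq_bigr => x' _ do rewrite sum_const_mul (Hc x' x y) -/cnt.
  by rewrite -mulr_suml -mulr_suml PAB1 mul1r mulrC.
rewrite Hxy Hx Hy.
have [C0|C0] := eqVneq C 0.
  by rewrite C0 invr0 !mulr0 mul0r eqxx.
case: ifP => // /negbT H0.
have -> : PAB x / C * C * (cnt / C) = PAB x / C * cnt.
  by field.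
by rewrite divff // ln1 mulr0.
Qed.

Lemma Ablk0 (F : nzRingType) K m c (i : 'I_K) : Ablk (0 : 'M[F]_(K * m, c)) i = 0.
Proof. by apply/matrixP => a b; rewrite !mxE. Qed.

Lemma Bblk0 (F : nzRingType) L n c (j : 'I_L) : Bblk (0 : 'M[F]_(c, L * n)) j = 0.
Proof. by apply/matrixP => a b; rewrite !mxE. Qed.

Lemma enum_fun (N T : nat) (Sset : {set 'I_N}) (HS : #|Sset| = T) :
  exists f : 'I_T -> 'I_N, injective f /\ forall k, k \in Sset -> exists t, f t = k.
Proof.
exists (fun t => enum_val (cast_ord (esym HS) t)); split.
  by move=> a b /enum_val_inj /cast_ord_inj.
move=> k Hk; exists (cast_ord HS (enum_rank_in Hk k)).
by rewrite cast_ordK enum_rankK_in.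
Qed.

Lemma solve_on (F : comUnitRingType) (V : lmodType F) N T (e : 'I_T -> nat)
  (rho : 'I_N -> F) (Sset : {set 'I_N}) (D : 'I_N -> V) (f : 'I_T -> 'I_N) :
  (forall k, k \in Sset -> exists t, f t = k) ->
  rowsub f (Vmx rho e) \in unitmx ->
  exists cc : 'I_T -> V, forall k, k \in Sset -> \sum_t rho k ^+ e t *: cc t = D k.
Proof.
move=> Hf Hu.
have [cc Hcc] := exist_solve (fun t => D (f t)) Hu.
exists cc => k /Hf [t <-]; rewrite -Hcc; apply: eq_bigr => s _.
by rewrite !mxE.
Qed.

Lemma shift_view p q K L T N m c n (ap : 'I_K -> 'I_q) (as_ : 'I_T -> 'I_q)
  (bp : 'I_L -> 'I_q) (bs : 'I_T -> 'I_q) (rho : 'I_N -> 'F_p)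
  (Sset : {set 'I_N}) (f : 'I_T -> 'I_N) :
  (forall k, k \in Sset -> exists t, f t = k) ->
  rowsub f (Vmx rho (fun j => val (as_ j))) \in unitmx ->
  rowsub f (Vmx rho (fun j => val (bs j))) \in unitmx ->
  forall x : 'M['F_p]_(K * m, c) * 'M['F_p]_(c, L * n),
  exists h : RandT p T m c n -> RandT p T m c n, bijective h /\
    forall r, colluders_view ap as_ bp bs rho Sset (x, r) =
              colluders_view ap as_ bp bs rho Sset ((0, 0), h r).
Proof.
move=> Hf HA HB [A B].
have [cA HcA] := solve_on (fun k => \sum_(i < K) rho k ^+ ap i *: Ablk A i) Hf HA.
have [cB HcB] := solve_on (fun k => \sum_(j < L) rho k ^+ bp j *: Bblk B j) Hf HB.
pose h (r : RandT p T m c n) : RandT p T m c n :=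
  ([ffun t => r.1 t + cA t], [ffun t => r.2 t + cB t]).
pose g (r : RandT p T m c n) : RandT p T m c n :=
  ([ffun t => r.1 t - cA t], [ffun t => r.2 t - cB t]).
exists h; split.
  exists g => [[r1 r2]|[r1 r2]]; rewrite /h /g /=; congr pair;
    by apply/ffunP => t; rewrite !ffunE ?addrK ?subrK.
move=> [R S]; apply/ffunP => k; rewrite !ffunE /=.
case: ifP => // Hk.
rewrite /shareA /shareB /=.
have EA : \sum_(i < K) rho k ^+ ap i *: Ablk (0 : 'M['F_p]_(K * m, c)) i = 0.
  by apply: big1 => i _; rewrite [Ablk _ _](_ : _ = 0) ?scaler0 //; apply/matrixP => a b; rewrite !mxE.
have EB : \sum_(j < L) rho k ^+ bp j *: Bblk (0 : 'M['F_p]_(c, L * n)) j = 0.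
  by apply: big1 => i _; rewrite [Bblk _ _](_ : _ = 0) ?scaler0 //; apply/matrixP => a b; rewrite !mxE.
rewrite EA EB !add0r.
rewrite -HcA // -HcB // -!big_split.
congr (_, _); apply: eq_bigr => t _; by rewrite ffunE scalerDr addrC.
Qed.

Lemma mi_zero2 (R : realType) (DT RT TY : finType) (PAB : DT -> R)
  (Y : DT * RT -> TY) (x0 : DT) : is_pmf PAB ->
  (forall x, exists h : RT -> RT, bijective h /\ forall r, Y (x, r) = Y (x0, h r)) ->
  mutual_info (fun w : DT * RT => PAB w.1 / #|{:RT}|%:R) (fun w => w.1) Y = 0.
Proof.
move=> HP Hs; apply: mi_zero => // x x' y.
have key : forall x1, \sum_(r | Y (x1,r) == y) (1:R) = \sum_(r | Y (x0,r) == y) 1.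
  move=> x1; have [h [hb Hh]] := Hs x1.
  rewrite [RHS](reindex_inj (bij_inj hb)).
  by apply: eq_bigl => r; rewrite -Hh.
by rewrite (key x) (key x').
Qed.

Lemma privacy (R : realType) p q K L T N m c n (ap : 'I_K -> 'I_q)
  (as_ : 'I_T -> 'I_q) (bp : 'I_L -> 'I_q) (bs : 'I_T -> 'I_q) (rho : 'I_N -> 'F_p) :
  (forall f : 'I_T -> 'I_N, injective f ->
      rowsub f (Vmx rho (fun j => val (as_ j))) \in unitmx /\
      rowsub f (Vmx rho (fun j => val (bs j))) \in unitmx) ->
  T_private R m c n ap as_ bp bs rho.
Proof.
move=> Hinv PAB HP Sset HS.
have [f [finj Hf]] := enum_fun HS.
have [HA HB] := Hinv f finj.
rewrite /scheme_law.
apply: (mi_zero2 (RT := RandT p T m c n) (x0 := (0, 0))) => //.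
move=> x. exact: (@shift_view p q K L T N m c n ap as_ bp bs rho Sset f Hf HA HB x).
Qed.

Lemma sumset_in q n1 n2 (f : 'I_n1 -> 'I_q) (g : 'I_n2 -> 'I_q) (x : 'I_q) i j :
  val x = ((f i + g j) %% q)%N -> x \in sumset (entries f) (entries g).
Proof.
move=> Hx; rewrite /sumset inE; apply/existsP; exists (f i).
apply/andP; split; first by apply/imsetP; exists i.
apply/existsP; exists (g j); apply/andP; split; first by apply/imsetP; exists j.
by apply/eqP.
Qed.

Lemma TL_inj q K L (ap : 'I_K -> 'I_q) (bp : 'I_L -> 'I_q) (Hq : (0 < q)%N) :
  #|TL ap bp| = (K * L)%N ->
  forall i1 j1 i2 j2, ((ap i1 + bp j1) %% q = (ap i2 + bp j2) %% q)%N ->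
  i1 = i2 /\ j1 = j2.
Proof.
move=> HTL.
pose phi := fun ij : 'I_K * 'I_L => (Ordinal (ltn_pmod (ap ij.1 + bp ij.2) Hq) : 'I_q).
have Hsub : TL ap bp \subset [set phi x | x in [set: 'I_K * 'I_L]].
  apply/subsetP => x; rewrite /TL /sumset inE.
  move=> /existsP [a /andP [/imsetP [i1 _ ->] /existsP [b /andP [/imsetP [j1 _ ->] /eqP Hx]]]].
  by apply/imsetP; exists (i1, j1) => //; apply: val_inj.
have Hcard : #|[set phi x | x in [set: 'I_K * 'I_L]]| == #|[set: 'I_K * 'I_L]|.
  rewrite eqn_leq leq_imset_card /= cardsT card_prod !card_ord -HTL.
  exact: subset_leq_card.
move/imset_injP: Hcard => Hi i1 j1 i2 j2 H.
have : phi (i1, j1) = phi (i2, j2) by apply: val_inj.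
by move/Hi => /(_ (in_setT _) (in_setT _)) [-> ->].
Qed.

Lemma decod p q K L T N m c n (ap : 'I_K -> 'I_q) (as_ : 'I_T -> 'I_q)
  (bp : 'I_L -> 'I_q) (bs : 'I_T -> 'I_q) (rho : 'I_N -> 'F_p) :
  is_CAT N ap as_ bp bs -> CAT_eval_conditions ap as_ bp bs rho ->
  decodable m c n ap as_ bp bs rho.
Proof.
move=> [Hq [HN [HTL [D1 [D2 [D3 _]]]]]] [Hrq [HV _]].
set G := gamma ap as_ bp bs.
have HGs : size G = N by rewrite /G /gamma size_sort size_image.
have HGu : uniq G.
  by rewrite /G /gamma sort_uniq map_inj_uniq ?enum_uniq //; exact: val_inj.
have HGm : forall x : 'I_q, x \in allU ap as_ bp bs -> val x \in G.
  by move=> x Hx; rewrite /G /gamma mem_sort; apply: image_f.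
have Hidx : forall r, r \in G -> exists j0 : 'I_N, forall j : 'I_N, (nth 0%N G j == r) = (j == j0).
  move=> r Hr; have Hi : (index r G < N)%N by rewrite -HGs index_mem.
  exists (Ordinal Hi) => j.
  by rewrite -{1}(nth_index 0%N Hr) nth_uniq // ?HGs.
pose V := Vmx rho (fun j : 'I_N => nth 0%N G j).
exists (fun W i j => \sum_(j' : 'I_N | nth 0%N G j' == ((ap i + bp j) %% q)%N)
                      \sum_k invmx V j' k *: W k).
move=> A B R S i j.
pose ea := fun u : 'I_K + 'I_T => match u with inl i => val (ap i) | inr t => val (as_ t) end.
pose eb := fun v : 'I_L + 'I_T => match v with inl j => val (bp j) | inr t => val (bs t) end.
pose MA := fun u : 'I_K + 'I_T => match u with inl i => Ablk A i | inr t => R t end.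
pose MB := fun v : 'I_L + 'I_T => match v with inl j => Bblk B j | inr t => S t end.
pose res u v := ((ea u + eb v) %% q)%N.
have inU : forall x, [\/ x \in TL ap bp, x \in TR ap bs, x \in BL as_ bp | x \in BR as_ bs] ->
    x \in allU ap as_ bp bs.
  by move=> x [] H; rewrite /allU !in_setU H ?orbT.
have HresG : forall u v, res u v \in G.
  move=> u v.
  have -> : res u v = val (Ordinal (ltn_pmod (ea u + eb v) Hq)) by [].
  apply: HGm; apply: inU.
  case: u => [i'|t']; case: v => [j'|s'].
  - by apply: Or41; apply: sumset_in.
  - by apply: Or42; apply: sumset_in.
  - by apply: Or43; apply: sumset_in.
  - by apply: Or44; apply: sumset_in.
pose Cc (j' : 'I_N) := \sum_u \sum_(v | res u v == nth 0%N G j') MA u *m MB v.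
have HW : forall k, shareA ap as_ rho A R k *m shareB bp bs rho B S k =
    \sum_(j' : 'I_N) V k j' *: Cc j'.
  move=> k.
  have eA : shareA ap as_ rho A R k = \sum_u rho k ^+ ea u *: MA u.
    by rewrite /shareA big_sumType.
  have eB : shareB bp bs rho B S k = \sum_v rho k ^+ eb v *: MB v.
    by rewrite /shareB big_sumType.
  rewrite eA eB.
  transitivity (\sum_u \sum_v rho k ^+ res u v *: (MA u *m MB v)).
    rewrite mulmx_suml; apply: eq_bigr => u _; rewrite mulmx_sumr.
    apply: eq_bigr => v _.
    by rewrite -scalemxAl -scalemxAr scalerA -exprD /res (expr_mod _ (Hrq k)).
  symmetry; under eq_bigr do rewrite scaler_sumr.
  rewrite exchange_big; apply: eq_bigr => u _.
  under eq_bigr do rewrite scaler_sumr.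
  rewrite (exchange_big_dep predT) //; apply: eq_bigr => v _.
  have [j0 Hj0] := Hidx _ (HresG u v).
  rewrite (eq_bigl (fun j => j == j0)) ?big_pred1_eq; last first.
    by move=> j'; rewrite /= eq_sym Hj0.
  have := Hj0 j0; rewrite eqxx => /eqP Hn.
  by rewrite /V mxE Hn.
have HC : forall j', \sum_k invmx V j' k *: (shareA ap as_ rho A R k *m shareB bp bs rho B S k) = Cc j'.
  move=> j'; under eq_bigr do rewrite HW.
  by apply: comb_inv; rewrite mulVmx.
under eq_bigr do rewrite HC.
have [j0 Hj0] := Hidx _ (HresG (inl i) (inl j)).
rewrite (eq_bigl (fun j' => j' == j0)) ?big_pred1_eq; last by move=> j'; rewrite Hj0.
have := Hj0 j0; rewrite eqxx => /eqP Hn.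
rewrite /Cc Hn.
have key : forall u v, res u v == res (inl i) (inl j) -> u = inl i /\ v = inl j.
  move=> u v /eqP Huv.
  pose o0 : 'I_q := Ordinal (ltn_pmod (ap i + bp j) Hq).
  have h1 : o0 \in TL ap bp by apply: sumset_in.
  case: u Huv => [i'|t']; case: v => [j'|s'] /= Huv.
  - by have [-> ->] := TL_inj Hq HTL Huv.
  - have h2 : o0 \in TR ap bs by apply: (sumset_in (i := i') (j := s')); exact: (esym Huv).
    have : o0 \in TL ap bp :&: TR ap bs by rewrite in_setI h1 h2.
    by rewrite D1 in_set0.
  - have h2 : o0 \in BL as_ bp by apply: (sumset_in (i := t') (j := j')); exact: (esym Huv).
    have : o0 \in TL ap bp :&: BL as_ bp by rewrite in_setI h1 h2.
    by rewrite D2 in_set0.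
  - have h2 : o0 \in BR as_ bs by apply: (sumset_in (i := t') (j := s')); exact: (esym Huv).
    have : o0 \in TL ap bp :&: BR as_ bs by rewrite in_setI h1 h2.
    by rewrite D3 in_set0.
rewrite (bigD1 (inl i)) //= [X in _ + X]big1 ?addr0; last first.
  move=> u Hu; apply: big1 => v Hv.
  by have [Hu' _] := key _ _ Hv; rewrite Hu' eqxx in Hu.
rewrite (bigD1 (inl j)) ?eqxx //= big1 ?addr0 //.
move=> v /andP [Hv Hne].
by have [_ Hv'] := key _ _ Hv; rewrite Hv' eqxx in Hne.
Qed.

Theorem theorem1 (q K L T N : nat)
    (ap : 'I_K -> 'I_q) (as_ : 'I_T -> 'I_q) (bp : 'I_L -> 'I_q) (bs : 'I_T -> 'I_q)
    (Hcat : is_CAT N ap as_ bp bs)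
    (p : nat) (Hp : prime p) (Hqp : (q %| p.-1)%N)
    (rho : 'I_N -> 'F_p) (Hrho : CAT_eval_conditions ap as_ bp bs rho) :
  forall m c n : nat,
    (forall R : realType, T_private R m c n ap as_ bp bs rho) /\
    decodable m c n ap as_ bp bs rho.
Proof.
move=> m c n; split.
  by move=> R; apply: privacy; case: Hrho => _ [_ H].
exact: decod.
Qed.
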